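(* Let $\nu>-1$ be real and let $j_1^\nu$ be the smallest positive zero of $J_\nu(\cdot;q^2)$. Then $j_1^\nu<q^{-1}\sqrt{1+q^{2\nu}}$.
   Context: Fix $0<q<1$. For $a\in\mathbb C$ put $(a;q)_0=1$, $(a;q)_k=\prod_{i=0}^{k-1}(1-aq^i)$, $(a;q)_\infty=\prod_{i\ge0}(1-aq^i)$. For $\nu\in\mathbb C$ and $x\in\mathbb C\setminus\{0\}$ the Hahn–Exton $q$-Bessel function is $$J_\nu(x;q^2)=\frac{x^\nu}{(q^2;q^2)_\infty}\sum_{k=0}^\infty\frac{(-1)^kq^{k(k+1)}(q^{2\nu+2k+2};q^2)_\infty}{(q^2;q^2)_k}\,x^{2k},$$ with $x^\nu=\exp(\nu\operatorname{Log}x)$ (principal branch). For $\nu>-1$ this function has infinitely many positive zeros. *)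

(* Defs.v *)
From Stdlib Require Import Reals.
From Coquelicot Require Import Coquelicot.
Open Scope R_scope.

Fixpoint qpoch (a b : R) (k : nat) : R :=
  match k with
  | O => 1
  | S k' => qpoch a b k' * (1 - a * b ^ k')
  end.

Definition qpoch_inf (a b : R) : R := real (Lim_seq (fun n => qpoch a b n)).

(* Hahn--Exton q-Bessel function J_nu(x; q^2), for real nu and real x > 0
   (so that x^nu = exp(nu ln x) is the principal power, Rpower x nu).
   q^(2nu+2k+2) is the real power Rpower q (2 nu + 2k + 2). *)
Definition HE_J (q nu x : R) : R :=
  Rpower x nu / qpoch_inf (q ^ 2) (q ^ 2) *
  Series (fun k : nat =>
    (-1) ^ k * q ^ (k * (k + 1)) *
    qpoch_inf (Rpower q (2 * nu + 2 * INR k + 2)) (q ^ 2) /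
    qpoch (q ^ 2) (q ^ 2) k * x ^ (2 * k)).

(* Main.v *)
Require Import Defs.
From Stdlib Require Import Reals.
From Coquelicot Require Import Coquelicot.
Open Scope R_scope.
From Stdlib Require Import Lra Lia.

Lemma qpoch_shift c p n : qpoch c p (S n) = (1 - c) * qpoch (c * p) p n.
Proof.
  induction n as [|n IH]; simpl in *. ring.
  rewrite IH. ring.
Qed.

Lemma real_Rbar_mult x l : real (Rbar_mult (Finite x) l) = x * real l.
Proof.
  destruct l as [l| |]; simpl; try ring;
  unfold Rbar_mult, Rbar_mult';
  repeat (destruct Rle_dec || destruct Rle_lt_or_eq_dec); simpl; ring.
Qed.

Lemma qpoch_inf_shift c p : qpoch_inf c p = (1 - c) * qpoch_inf (c * p) p.
Proof.
  unfold qpoch_inf.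
  rewrite <- Lim_seq_incr_1.
  rewrite (Lim_seq_ext _ (fun n => (1 - c) * qpoch (c * p) p n)).
  2: { intros n; apply qpoch_shift. }
  rewrite Lim_seq_scal_l. apply real_Rbar_mult.
Qed.

Lemma exp_bound x : 0 <= x < 1 -> exp (- (x / (1 - x))) <= 1 - x.
Proof.
  intros [h0 h1].
  assert (H := exp_ineq1_le (x / (1 - x))).
  rewrite exp_Ropp.
  assert (1 + x / (1 - x) = / (1 - x)) by (field; lra).
  rewrite H0 in H.
  assert (0 < /(1-x)) by (apply Rinv_0_lt_compat; lra).
  set (E := exp (x / (1 - x))) in *.
  rewrite <- (Rinv_inv (1 - x)).
  apply Rinv_le_contravar; lra.
Qed.

Lemma exp_le_mono x y : x <= y -> exp x <= exp y.
Proof. intros [h|h]; [left; apply exp_increasing; exact h| right; now subst]. Qed.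

Section QP.
Variables c p : R.
Hypothesis hc0 : 0 <= c.
Hypothesis hc1 : c < 1.
Hypothesis hp0 : 0 < p.
Hypothesis hp1 : p < 1.

Lemma pow_le1 n : 0 < p ^ n <= 1.
Proof.
  split. apply pow_lt; lra.
  induction n; simpl. lra.
  assert (0 < p ^ n) by (apply pow_lt; lra). nra.
Qed.

Lemma qpoch_pos n : 0 < qpoch c p n <= 1.
Proof.
  induction n; simpl. lra.
  destruct (pow_le1 n). assert (c * p ^ n <= c) by nra.
  assert (0 <= c * p ^ n) by nra. split; [apply Rmult_lt_0_compat|]; nra.
Qed.

Definition Kc := c / ((1 - c) * (1 - p)).

Lemma qpoch_lower n : exp (- Kc * (1 - p ^ n)) <= qpoch c p n.
Proof.
  induction n; simpl.
  - replace (- Kc * (1 - 1)) with 0 by ring. rewrite exp_0. lra.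
  - destruct (pow_le1 n) as [h1 h2].
    replace (- Kc * (1 - p * p ^ n)) with (- Kc * (1 - p ^ n) + - (c * p ^ n / (1 - c)))
      by (unfold Kc; field; repeat split; lra).
    rewrite exp_plus.
    assert (exp (- (c * p ^ n / (1 - c))) <= 1 - c * p ^ n).
    { apply Rle_trans with (exp (- (c * p ^ n / (1 - c * p ^ n)))).
      - destruct (Req_dec c 0) as [->|hc].
        + replace (0 * p ^ n / (1 - 0)) with (0 * p ^ n / (1 - 0 * p ^ n)) by field. lra.
        + assert (c * p ^ n <= c) by nra.
          assert (0 <= c * p ^ n) by nra.
          assert (c * p ^ n / (1 - c * p ^ n) <= c * p ^ n / (1 - c)).
          { unfold Rdiv. apply Rmult_le_compat_l; [lra|].
            apply Rinv_le_contravar; lra. }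
          apply exp_le_mono. lra.
      - apply exp_bound. split; nra. }
    assert (0 < exp (- Kc * (1 - p ^ n))) by apply exp_pos.
    assert (0 < exp (- (c * p ^ n / (1 - c)))) by apply exp_pos.
    apply Rmult_le_compat; lra.
Qed.
End QP.

Lemma qpoch_inf_pos c p : 0 <= c < 1 -> 0 < p < 1 -> 0 < qpoch_inf c p <= 1.
Proof.
  intros [hc0 hc1] [hp0 hp1].
  assert (hK : 0 <= Kc c p).
  { unfold Kc. apply Rmult_le_pos; [lra|]. left; apply Rinv_0_lt_compat.
    apply Rmult_lt_0_compat; lra. }
  assert (hlow : forall n, exp (- Kc c p) <= qpoch c p n).
  { intros n. eapply Rle_trans; [|apply qpoch_lower; lra].
    apply exp_le_mono. destruct (pow_le1 p hp0 hp1 n). nra. }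
  assert (H1 := Lim_seq_le_loc (fun _ => exp (- Kc c p)) (qpoch c p)).
  assert (H2 := Lim_seq_le_loc (qpoch c p) (fun _ => 1)).
  rewrite Lim_seq_const in H1, H2.
  unfold qpoch_inf.
  destruct (Lim_seq (qpoch c p)) as [l| |]; simpl in *.
  - assert (exp (- Kc c p) <= l).
    { apply H1. exists O. intros; apply hlow. }
    assert (l <= 1).
    { apply H2. exists O. intros; apply qpoch_pos; lra. }
    assert (0 < exp (- Kc c p)) by apply exp_pos. lra.
  - exfalso; apply H2. exists O. intros; apply qpoch_pos; lra.
  - exfalso; apply H1. exists O. intros; apply hlow.
Qed.

Lemma nz_nbhd (H : R -> R) x : continuity_pt H x -> H x <> 0 ->
  exists del, 0 < del /\ forall u, Rabs (u - x) < del -> H u <> 0.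
Proof.
  intros hc hx.
  destruct (hc (Rabs (H x) / 2)) as [del [hd hu]].
  { apply Rdiv_lt_0_compat; [apply Rabs_pos_lt; exact hx| lra]. }
  exists del. split; [exact hd|]. intros u hu' Hu.
  destruct (Req_dec u x) as [->|hne]; [exact (hx Hu)|].
  assert (h := hu u (conj (conj I (not_eq_sym hne)) hu')).
  unfold R_dist in h. simpl in h. unfold R_dist in h. rewrite Hu in h.
  replace (0 - H x) with (- H x) in h by ring. rewrite Rabs_Ropp in h.
  assert (0 < Rabs (H x)) by (apply Rabs_pos_lt; exact hx). lra.
Qed.

Lemma smallest_zero (H : R -> R) (hc : continuity H) (h0 : H 0 <> 0) z
  (hz : 0 < z) (Hz : H z = 0) :
  exists m, 0 < m <= z /\ H m = 0 /\ forall u, 0 <= u < m -> H u <> 0.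
Proof.
  set (E := fun s => 0 <= s <= z /\ forall u, 0 <= u <= s -> H u <> 0).
  assert (E0 : E 0).
  { split; [lra|]. intros u hu. replace u with 0 by lra. exact h0. }
  destruct (completeness E) as [m [hub hlub]].
  { exists z. intros s [hs _]. lra. }
  { exists 0. exact E0. }
  assert (hm0 : 0 <= m) by (apply hub; exact E0).
  assert (hmz : m <= z) by (apply hlub; intros s [hs _]; lra).
  assert (hi : forall u, 0 <= u < m -> H u <> 0).
  { intros u hu Hu0.
    assert (m <= u).
    { apply hlub. intros s [hs hs2].
      destruct (Rle_lt_dec s u) as [l|l]; [exact l|].
      exfalso. apply (hs2 u); [lra|exact Hu0]. }
    lra. }
  assert (hpos : 0 < m).
  { destruct (nz_nbhd H 0 (hc 0) h0) as [del [hd hdel]].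
    assert (E (Rmin (del / 2) z)).
    { split. split; [apply Rmin_glb; lra| apply Rmin_r].
      intros u hu. apply hdel. assert (u <= del / 2) by (eapply Rle_trans; [apply hu| apply Rmin_l]).
      rewrite Rabs_right; lra. }
    assert (Rmin (del / 2) z <= m) by (apply hub; assumption).
    assert (0 < Rmin (del / 2) z) by (apply Rmin_glb_lt; lra). lra. }
  exists m. split; [lra|]. split; [|exact hi].
  destruct (Req_dec (H m) 0) as [e|hne]; [exact e|exfalso].
  destruct (Req_dec m z) as [e|hmz']; [subst m; exact (hne Hz)|].
  destruct (nz_nbhd H m (hc m) hne) as [del [hd hdel]].
  set (s := Rmin (m + del / 2) z).
  assert (hs1 : m < s) by (apply Rmin_glb_lt; lra).
  assert (E s).
  { split. split; [lra| apply Rmin_r].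
    intros u hu. destruct (Rlt_le_dec u m) as [l|l].
    - apply hi; lra.
    - apply hdel. assert (u <= m + del / 2) by (eapply Rle_trans; [apply hu| apply Rmin_l]).
      rewrite Rabs_right; lra. }
  assert (s <= m) by (apply hub; assumption). lra.
Qed.
Section Coefs.
Variables q nu : R.
Hypothesis hq0 : 0 < q.
Hypothesis hq1 : q < 1.
Hypothesis hnu : -1 < nu.

Definition p := q ^ 2.
Definition a := Rpower q (2 * nu).
Definition C k := qpoch_inf (a * p ^ (S k)) p.
Definition P k := qpoch p p k.
Definition d k := (-1) ^ k * q ^ (k * (k + 1)) * C k / P k.

Lemma p_bounds : 0 < p < 1.
Proof. unfold p. split; nra. Qed.

Lemma a_pos : 0 < a.
Proof. unfold a, Rpower. apply exp_pos. Qed.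

Lemma ap_lt1 : a * p < 1.
Proof.
  unfold a, p. replace (q ^ 2) with (Rpower q (INR 2)) by (apply Rpower_pow; lra).
  rewrite <- Rpower_plus. unfold Rpower.
  assert (ln q < 0) by (rewrite <- ln_1; apply ln_increasing; lra).
  rewrite <- exp_0. apply exp_increasing. simpl INR.
  assert (0 < 2 * nu + (1 + 1)) by lra. nra.
Qed.

Lemma coef_eq k : Rpower q (2 * nu + 2 * INR k + 2) = a * p ^ (S k).
Proof.
  replace (2 * nu + 2 * INR k + 2) with (2 * nu + INR (2 * S k)).
  2: { rewrite mult_INR, !S_INR. simpl INR. ring. }
  rewrite Rpower_plus, Rpower_pow by lra. unfold a, p. rewrite pow_mult. ring.
Qed.

Lemma apk_bounds k : 0 <= a * p ^ (S k) < 1.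
Proof.
  destruct p_bounds. destruct (pow_le1 p H H0 k). assert (ha := a_pos).
  assert (hh := ap_lt1). simpl. split; [|nra].
  apply Rmult_le_pos; [lra|]. apply Rmult_le_pos; lra.
Qed.

Lemma C_pos k : 0 < C k <= 1.
Proof. unfold C. apply qpoch_inf_pos. apply apk_bounds. apply p_bounds. Qed.

Lemma P_pos k : 0 < P k <= 1.
Proof. unfold P. destruct p_bounds. apply qpoch_pos; lra. Qed.

Lemma C_rec k : C k = (1 - a * p ^ (S k)) * C (S k).
Proof.
  unfold C. rewrite qpoch_inf_shift. replace (a * p ^ S (S k)) with (a * p ^ S k * p) by (simpl; ring). reflexivity.
Qed.

Lemma d_rec k : d (S k) * (1 - p ^ (S k)) * (1 - a * p ^ (S k)) = - p ^ (S k) * d k.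
Proof.
  unfold d. rewrite (C_rec k).
  assert (hP : P (S k) = P k * (1 - p ^ (S k))) by (unfold P; simpl; ring).
  rewrite hP.
  replace ((S k) * (S k + 1))%nat with (k * (k + 1) + 2 * S k)%nat by lia.
  rewrite pow_add, (pow_mult q 2 (S k)). fold p.
  destruct (P_pos k). destruct p_bounds. destruct (pow_le1 p H1 H2 (S k)).
  assert (p ^ S k < 1).
  { simpl. destruct (pow_le1 p H1 H2 k). nra. }
  simpl pow at 1. field. lra.
Qed.

Lemma pSk_lt1 k : 0 < p ^ S k < 1.
Proof.
  destruct p_bounds. destruct (pow_le1 p H H0 k). simpl. split; nra.
Qed.

Lemma d_nz n : d n <> 0.
Proof.
  unfold d. destruct (C_pos n). destruct (P_pos n).
  assert ((-1) ^ n <> 0) by (apply pow_nonzero; lra).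
  assert (0 < q ^ (n * (n + 1))) by (apply pow_lt; lra).
  apply Rmult_integral_contrapositive_currified; [|apply Rinv_neq_0_compat; lra].
  apply Rmult_integral_contrapositive_currified; [|lra].
  apply Rmult_integral_contrapositive_currified; lra.
Qed.

Lemma d_ratio n : d (S n) / d n = - p ^ S n / ((1 - p ^ S n) * (1 - a * p ^ S n)).
Proof.
  assert (h := d_rec n). assert (hn := d_nz n).
  destruct (pSk_lt1 n). destruct (apk_bounds n).
  assert (e : d (S n) = - p ^ S n * d n / ((1 - p ^ S n) * (1 - a * p ^ S n))).
  { rewrite <- h. field. split; lra. }
  rewrite e. field. repeat split; lra.
Qed.

Lemma d_radius : CV_radius d = p_infty.
Proof.
  apply CV_radius_infinite_DAlembert. apply d_nz.
  destruct p_bounds as [hp0 hp1]. assert (hb := ap_lt1). assert (ha := a_pos).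
  set (K := p / ((1 - p) * (1 - a * p))).
  assert (hK : 0 < K).
  { unfold K. apply Rmult_lt_0_compat; [lra|]. apply Rinv_0_lt_compat.
    apply Rmult_lt_0_compat; lra. }
  apply (is_lim_seq_le_le (fun _ => 0) _ (fun n => K * p ^ n)).
  - intros n. rewrite d_ratio. destruct (pSk_lt1 n). destruct (apk_bounds n).
    rewrite Rabs_div, Rabs_Ropp.
    2: { apply Rmult_integral_contrapositive_currified; lra. }
    rewrite (Rabs_right (p ^ S n)) by lra.
    rewrite (Rabs_right ((1 - p ^ S n) * (1 - a * p ^ S n))).
    2: { left; apply Rmult_lt_0_compat; lra. }
    split.
    + left. apply Rdiv_lt_0_compat; [lra|]. apply Rmult_lt_0_compat; lra.
    + unfold K. simpl pow at 1.
      assert (p * p ^ n <= p) by (destruct (pow_le1 p hp0 hp1 n); nra).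
      assert (a * (p * p ^ n) <= a * p) by (apply Rmult_le_compat_l; lra).
      replace (p / ((1 - p) * (1 - a * p)) * p ^ n) with
        ((p * p ^ n) * / ((1 - p) * (1 - a * p))) by (field; lra).
      unfold Rdiv.
      apply Rmult_le_compat_l; [destruct (pow_le1 p hp0 hp1 n); nra|].
      apply Rinv_le_contravar. apply Rmult_lt_0_compat; lra.
      apply Rmult_le_compat; simpl; lra.
  - apply is_lim_seq_const.
  - replace (Finite 0) with (Rbar_mult K 0) by (simpl; f_equal; ring).
    apply is_lim_seq_scal_l. apply is_lim_seq_geom. rewrite Rabs_right; lra.
Qed.

Lemma d_ex x : ex_pseries d x.
Proof. apply CV_radius_inside. rewrite d_radius. exact I. Qed.

Lemma d_cont : continuity (PSeries d).
Proof. intros x. apply PSeries_continuity. rewrite d_radius. exact I. Qed.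

Lemma HE_J_eq x : HE_J q nu x = Rpower x nu / qpoch_inf p p * PSeries d (x ^ 2).
Proof.
  unfold HE_J, PSeries. f_equal. apply Series_ext. intros k.
  rewrite coef_eq, (pow_mult x 2 k). unfold d, C, P, p. reflexivity.
Qed.

Lemma d_exs x : ex_series (fun k => d k * x ^ k).
Proof. apply ex_pseries_R. apply d_ex. Qed.

Lemma qdiff s : PSeries d s + (p * s - 1 - a) * PSeries d (p * s) + a * PSeries d (p ^ 2 * s) = 0.
Proof.
  unfold PSeries.
  set (A := fun k => d k * s ^ k).
  set (B := fun k => d k * (p * s) ^ k).
  set (D := fun k => d k * (p ^ 2 * s) ^ k).
  set (T := fun k => A k + (- (1 + a) * B k + a * D k)).
  assert (eA : ex_series A) by apply d_exs.
  assert (eB : ex_series B) by apply d_exs.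
  assert (eD : ex_series D) by apply d_exs.
  assert (eB' : ex_series (fun k => - (1 + a) * B k)) by (apply (ex_series_scal_l (V := R_NormedModule)); exact eB).
  assert (eD' : ex_series (fun k => a * D k)) by (apply (ex_series_scal_l (V := R_NormedModule)); exact eD).
  assert (eBD : ex_series (fun k => - (1 + a) * B k + a * D k)) by (apply (ex_series_plus (V := R_NormedModule)); assumption).
  assert (eT : ex_series T) by (apply (ex_series_plus (V := R_NormedModule)); assumption).
  assert (hT : Series T = Series A - (1 + a) * Series B + a * Series D).
  { unfold T. rewrite Series_plus by assumption. rewrite Series_plus by assumption.
    rewrite !Series_scal_l. ring. }
  assert (hT2 : Series T = - (p * s) * Series B).
  { rewrite Series_incr_1 by exact eT.
    rewrite <- Series_scal_l.
    replace (T 0%nat) with 0 by (unfold T, A, B, D; simpl; ring).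
    rewrite Rplus_0_l. apply Series_ext. intros k.
    unfold T, A, B, D.
    rewrite !Rpow_mult_distr. rewrite <- (pow_mult p 2 (S k)).
    replace (p ^ (2 * S k)) with (p ^ S k * p ^ S k) by (rewrite <- pow_add; f_equal; lia).
    assert (h := d_rec k).
    replace (d (S k) * s ^ S k + (- (1 + a) * (d (S k) * (p ^ S k * s ^ S k)) + a * (d (S k) * (p ^ S k * p ^ S k * s ^ S k))))
      with (d (S k) * (1 - p ^ S k) * (1 - a * p ^ S k) * s ^ S k) by ring.
    rewrite h. simpl. ring. }
  fold A B D. lra.
Qed.

Lemma main_sec : exists j1 : R,
    0 < j1 /\ HE_J q nu j1 = 0 /\
    (forall y : R, 0 < y < j1 -> HE_J q nu y <> 0) /\
    j1 < / q * sqrt (1 + Rpower q (2 * nu)).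
Proof.
  fold a.
  destruct p_bounds as [hp0 hp1]. assert (ha := a_pos).
  set (H := PSeries d).
  assert (hH0 : 0 < H 0).
  { unfold H. rewrite PSeries_0. unfold d. simpl.
    destruct (C_pos 0). unfold P; simpl. replace (1 * 1 * C 0 / 1) with (C 0) by field. lra. }
  set (s0 := (1 + a) / p).
  set (s1 := p ^ 2 * s0).
  assert (hs0 : 0 < s0) by (apply Rdiv_lt_0_compat; lra).
  assert (hs1 : 0 < s1 < s0).
  { unfold s1. assert (0 < p * p) by nra. assert (p * p < 1) by nra. simpl. rewrite Rmult_1_r. split; nra. }
  assert (hq := qdiff s0). fold H in hq.
  replace (p * s0 - 1 - a) with 0 in hq by (unfold s0; field; lra).
  fold s1 in hq.
  assert (hz : exists z, 0 < z < s0 /\ H z = 0).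
  { destruct (Rle_lt_dec (H s1) 0) as [l|l].
    - destruct (IVT_cor H 0 s1 d_cont) as [z [hz1 hz2]]; [lra| nra |].
      exists z. split; [|exact hz2]. split; [|lra].
      destruct hz1 as [[h|h] _]; [exact h| subst z; lra].
    - destruct (IVT_cor H s1 s0 d_cont) as [z [hz1 hz2]]; [lra| nra |].
      exists z. split; [|exact hz2]. split; [lra|].
      destruct hz1 as [_ [h|h]]; [exact h| subst z; nra]. }
  destruct hz as [z [[hz0 hzs] hHz]].
  destruct (smallest_zero H d_cont ltac:(lra) z hz0 hHz) as [m [[hm0 hmz] [hHm hmin]]].
  assert (hQ := qpoch_inf_pos p p ltac:(lra) ltac:(lra)).
  exists (sqrt m). split; [apply sqrt_lt_R0; lra|]. split; [|split].
  - rewrite HE_J_eq. fold H. rewrite pow2_sqrt by lra. rewrite hHm. ring.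
  - intros y [hy0 hy1]. rewrite HE_J_eq. fold H.
    assert (hR : 0 < Rpower y nu) by (unfold Rpower; apply exp_pos).
    assert (y ^ 2 < m).
    { rewrite <- (pow2_sqrt m) by lra. simpl. nra. }
    assert (H (y ^ 2) <> 0) by (apply hmin; split; [simpl; nra| exact H0]).
    apply Rmult_integral_contrapositive_currified; [|exact H1].
    apply Rgt_not_eq. apply Rdiv_lt_0_compat; lra.
  - assert (hX : 0 < / q * sqrt (1 + a)).
    { apply Rmult_lt_0_compat; [apply Rinv_0_lt_compat; lra| apply sqrt_lt_R0; lra]. }
    rewrite <- (sqrt_pow2 (/ q * sqrt (1 + a))) by lra.
    apply sqrt_lt_1_alt. split; [lra|].
    replace ((/ q * sqrt (1 + a)) ^ 2) with s0; [lra|].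
    rewrite Rpow_mult_distr, pow2_sqrt by lra. unfold s0, p. field. lra.
Qed.
End Coefs.

Theorem mainTheorem8 (q nu : R) (hq0 : 0 < q) (hq1 : q < 1) (hnu : -1 < nu) :
  exists j1 : R,
    0 < j1 /\ HE_J q nu j1 = 0 /\
    (forall y : R, 0 < y < j1 -> HE_J q nu y <> 0) /\
    j1 < / q * sqrt (1 + Rpower q (2 * nu)).
Proof. exact (main_sec q nu hq0 hq1 hnu). Qed.
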